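(* Let $\Omega$ be a semigroup, $(\mathcal{A},\{\mu^1,\mu^2,\dots\})$ an $A_\infty$-algebra and $\{\mathcal{R}_\alpha:\mathcal{A}\to\mathcal{A}\}_{\alpha\in\Omega}$ a homotopy Rota-Baxter family on $\mathcal{A}$. Then $(\mathcal{A},\{\eta^1,\eta^2,\dots\})$ is a $Dend_\infty$-family algebra, where $\eta^k=(\eta^{k,[1]},\dots,\eta^{k,[k]})$ with $\eta^{k,[r]}_{\alpha_1,\dots,\alpha_k}(a_1,\dots,a_k):=\mu^k\big(\mathcal{R}_{\alpha_1}(a_1),\dots,\mathcal{R}_{\alpha_{r-1}}(a_{r-1}),a_r,\mathcal{R}_{\alpha_{r+1}}(a_{r+1}),\dots,\mathcal{R}_{\alpha_k}(a_k)\big)$ for $[r]\in C_k$, $\alpha_j\in\Omega$, $a_j\in\mathcal{A}$.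
   Context: $\mathbf{k}$ is a commutative unital ring of characteristic $0$; $\Omega$ a semigroup; $\mathcal{A}=\oplus_{i\in\mathbb{Z}}\mathcal{A}^i$ graded. Sign $\pm:=(-1)^{i(n+1)+n(|a_1|+\cdots+|a_{i-1}|)}$. An $A_\infty$-algebra is $\mathcal{A}$ with multilinear maps $\mu^k:\mathcal{A}^{\otimes k}\to\mathcal{A}$ of degree $k-2$, $k\ge1$, with $\sum_{m+n=N+1}\sum_{i=1}^m\pm\,\mu^m(a_1,\dots,a_{i-1},\mu^n(a_i,\dots,a_{i+n-1}),a_{i+n},\dots,a_N)=0$ for all $N\ge1$ and homogeneous $a_j$. A homotopy Rota-Baxter family on it is a collection $\{\mathcal{R}_\alpha\}_{\alpha\in\Omega}$ of degree-$0$ linear maps with $\mu^k(\mathcal{R}_{\alpha_1}(a_1),\dots,\mathcal{R}_{\alpha_k}(a_k))=\sum_{r=1}^k\mathcal{R}_{\alpha_1\cdots\alpha_k}\big(\mu^k(\mathcal{R}_{\alpha_1}(a_1),\dots,a_r,\dots,\mathcal{R}_{\alpha_k}(a_k))\big)$ (the $r$-th argument left without $\mathcal{R}$) for all $k\ge1$, $a_j\in\mathcal{A}$, $\alpha_j\in\Omega$. $C_k=\{[1],\dots,[k]\}$ formal symbols. For $m,n\ge1$, $1\le i\le m$, $1\le r\le m+n-1$: $R_0[r]$ is $[r]$ if $r\le i-1$, $[i]$ if $i\le r\le i+n-1$, $[r-n+1]$ if $r\ge i+n$; $R_i[r]$ is $[r-i+1]$ if $i\le r\le i+n-1$ and $[1]+\cdots+[n]$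 otherwise, with $\eta^{n,[1]+\cdots+[n]}:=\sum_s\eta^{n,[s]}$. A $Dend_\infty$-family algebra is $\mathcal{A}$ with, for each $k\ge1$, $\eta^k=(\eta^{k,[1]},\dots,\eta^{k,[k]})$, each $\eta^{k,[r]}=\{\eta^{k,[r]}_{\alpha_1,\dots,\alpha_k}:\mathcal{A}^{\otimes k}\to\mathcal{A}\}_{\alpha_j\in\Omega}$ multilinear of degree $k-2$ with $\eta^{k,[r]}_{\alpha_1,\dots,\alpha_k}$ independent of $\alpha_r$, satisfying for all $N\ge1$, $[r]\in C_N$, homogeneous $a_j$, $\alpha_j\in\Omega$: $\sum_{m+n=N+1}\sum_{i=1}^m\pm\,\eta^{m,R_0[r]}_{\alpha_1,\dots,\alpha_{i-1},\alpha_i\cdots\alpha_{i+n-1},\alpha_{i+n},\dots,\alpha_N}\big(a_1,\dots,a_{i-1},\eta^{n,R_i[r]}_{\alpha_i,\dots,\alpha_{i+n-1}}(a_i,\dots,a_{i+n-1}),a_{i+n},\dots,a_N\big)=0$. *)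

(* Defs.v *)
From HB Require Import structures.
From mathcomp Require Import all_boot all_order all_algebra.
Set Implicit Arguments. Unset Strict Implicit. Unset Printing Implicit Defensive.
Import Order.TTheory GRing.Theory Num.Theory.
Local Open Scope ring_scope.

Definition char0 (R : comNzRingType) : Prop := forall n : nat, (0 < n)%N -> n%:R != 0 :> R.

Section Defs.
Variables (R : comNzRingType) (A : lmodType R).

(* Z-grading A = (+)_{d in Z} gr d, as a direct sum of submodules. *)
Definition is_grading (gr : int -> {pred A}) : Prop :=
  [/\ forall d, GRing.submod_closed (gr d),
      forall a : A, exists s : seq (int * A),
        all (fun p => p.2 \in gr p.1) s /\ a = \sum_(p <- s) p.2
    & forall s : seq (int * A), uniq (unzip1 s) ->
        all (fun p => p.2 \in gr p.1) s -> \sum_(p <- s) p.2 = 0 ->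
        all (fun p => p.2 == 0) s].

Definition homs (gr : int -> {pred A}) (as_ : seq A) (ds : seq int) : bool :=
  all2 (fun a d => a \in gr d) as_ ds.

(* Koszul sign (-1)^{i(n+1) + n(|a_1|+...+|a_{i-1}|)}, i 1-indexed *)
Definition ksign (i n : nat) (ds : seq int) : R :=
  (-1) ^+ (i * n.+1 + n * `|(\sum_(d <- take i.-1 ds) d)%R|%N)%N.

(* (a_1,...,a_{i-1}, f(a_i,...,a_{i+n-1}), a_{i+n},...,a_N), i 1-indexed *)
Definition plug (i n : nat) (as_ : seq A) (x : A) : seq A :=
  take i.-1 as_ ++ x :: drop (i.-1 + n) as_.

Definition block {T} (i n : nat) (s : seq T) : seq T := take n (drop i.-1 s).

(* A_infinity algebra; mu applied to a list of length k is mu^k *)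
Definition multilinear (f : seq A -> A) : Prop :=
  forall (s1 s2 : seq A) (c : R) (x y : A),
    f (s1 ++ (c *: x + y) :: s2) = c *: f (s1 ++ x :: s2) + f (s1 ++ y :: s2).

Definition is_Ainf (gr : int -> {pred A}) (mu : seq A -> A) : Prop :=
  [/\ multilinear mu,
      forall (as_ : seq A) (ds : seq int), (0 < size as_)%N -> homs gr as_ ds ->
        mu as_ \in gr (\sum_(d <- ds) d + (size as_)%:Z - 2)
    & forall (N : nat) (as_ : seq A) (ds : seq int), (0 < N)%N -> size as_ = N ->
        homs gr as_ ds ->
        \sum_(1 <= n < N.+1) \sum_(1 <= i < (N.+1 - n).+1)
          ksign i n ds *: mu (plug i n as_ (mu (block i n as_))) = 0].

Variables (Omega : Type) (op : Omega -> Omega -> Omega).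

Definition sgprod (a : Omega) (t : seq Omega) : Omega := foldl op a t.

(* (alpha_1,...,alpha_{i-1}, alpha_i...alpha_{i+n-1}, alpha_{i+n},...,alpha_N) *)
Definition plugO (i n : nat) (als : seq Omega) : seq Omega :=
  match drop i.-1 als with
  | a :: t => take i.-1 als ++ sgprod a (take n.-1 t) :: drop n.-1 t
  | [::] => als
  end.

(* (R_{al_1} a_1, ..., a_r, ..., R_{al_k} a_k), r 1-indexed *)
Definition Rexcept (Rf : Omega -> A -> A) (r : nat) (als : seq Omega) (as_ : seq A)
  : seq A :=
  [seq (if p.1 == r then p.2.2 else Rf p.2.1 p.2.2) | p <- zip (iota 1 (size as_)) (zip als as_)].

Definition is_HRB_family (gr : int -> {pred A}) (mu : seq A -> A)
  (Rf : Omega -> A -> A) : Prop :=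
  [/\ forall al (c : R) (x y : A), Rf al (c *: x + y) = c *: Rf al x + Rf al y,
      forall al d a, a \in gr d -> Rf al a \in gr d
    & forall (a0 : Omega) (alt : seq Omega) (as_ : seq A),
        size as_ = (size alt).+1 ->
        mu [seq Rf p.1 p.2 | p <- zip (a0 :: alt) as_] =
        \sum_(1 <= r < (size as_).+1) Rf (sgprod a0 alt) (mu (Rexcept Rf r (a0 :: alt) as_))].

(* R_0[r] (the index of the outer operation), all 1-indexed *)
Definition R0 (n i r : nat) : nat :=
  if (r < i)%N then r else if (r < i + n)%N then i else (r - n).+1.

(* eta^{n, R_i[r]}; [1]+...+[n] is read as the sum over s *)
Definition etaRi (eta : nat -> seq Omega -> seq A -> A) (n i r : nat)
  (als : seq Omega) (as_ : seq A) : A :=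
  if (i <= r < i + n)%N then eta (r - i).+1 als as_
  else \sum_(1 <= s < n.+1) eta s als as_.

(* eta r als as = eta^{k,[r]}_{als}(as) for size als = size as = k, 1 <= r <= k *)
Definition is_Dend_family (gr : int -> {pred A})
  (eta : nat -> seq Omega -> seq A -> A) : Prop :=
  [/\ (forall (r : nat) (als : seq Omega) (s1 s2 : seq A) (c : R) (x y : A),
         (1 <= r <= size als)%N -> size als = (size s1 + size s2).+1 ->
         eta r als (s1 ++ (c *: x + y) :: s2)
         = c *: eta r als (s1 ++ x :: s2) + eta r als (s1 ++ y :: s2)),
      (forall (r : nat) (als : seq Omega) (as_ : seq A) (ds : seq int),
         (1 <= r <= size as_)%N -> size als = size as_ -> homs gr as_ ds ->
         eta r als as_ \in gr (\sum_(d <- ds) d + (size as_)%:Z - 2)),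
      (forall (s1 s2 : seq Omega) (a b : Omega) (as_ : seq A),
         size as_ = (size s1 + size s2).+1 ->
         eta (size s1).+1 (s1 ++ a :: s2) as_ = eta (size s1).+1 (s1 ++ b :: s2) as_)
    & forall (N r : nat) (als : seq Omega) (as_ : seq A) (ds : seq int),
        (1 <= r <= N)%N -> size als = N -> size as_ = N -> homs gr as_ ds ->
        \sum_(1 <= n < N.+1) \sum_(1 <= i < (N.+1 - n).+1)
          ksign i n ds *:
            eta (R0 n i r) (plugO i n als)
              (plug i n as_ (etaRi eta n i r (block i n als) (block i n as_))) = 0].

Definition eta_of (mu : seq A -> A) (Rf : Omega -> A -> A)
  (r : nat) (als : seq Omega) (as_ : seq A) : A := mu (Rexcept Rf r als as_).

End Defs.

(* Main.v *)
Require Import Defs.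
From HB Require Import structures.
From mathcomp Require Import all_boot all_order all_algebra.
From mathcomp Require Import zify.
Import GRing.Theory.
Local Open Scope ring_scope.

Section Helpers.
Variables (k : comNzRingType) (A : lmodType k) (Omega : Type)
  (op : Omega -> Omega -> Omega) (Rf : Omega -> A -> A).

Definition RexG (m r : nat) (al : seq Omega) (s : seq A) : seq A :=
  [seq (if p.1 == r then p.2.2 else Rf p.2.1 p.2.2) | p <- zip (iota m (size s)) (zip al s)].

Lemma RexcE r al s : Rexcept Rf r al s = RexG 1 r al s. Proof. by []. Qed.
Lemma RexG_nil m r al : RexG m r al [::] = [::]. Proof. by case: al. Qed.
Lemma RexG_nil2 m r s : RexG m r [::] s = [::]. Proof. by case: s. Qed.
Lemma RexG_cons m r a al x s :
  RexG m r (a :: al) (x :: s) = (if m == r then x else Rf a x) :: RexG m.+1 r al s.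
Proof. by []. Qed.

Lemma RexG_cat m r al1 al2 s1 s2 : size al1 = size s1 ->
  RexG m r (al1 ++ al2) (s1 ++ s2) = RexG m r al1 s1 ++ RexG (m + size s1) r al2 s2.
Proof.
elim: s1 al1 m => [|x s1 IH] [|a al1] m Hs.
- by rewrite !cat0s addn0.
- discriminate Hs.
- discriminate Hs.
- case: Hs => Hs. by rewrite !cat_cons !RexG_cons IH // addSnnS.
Qed.

Lemma RexG_shift m kk r al s : RexG (m + kk) (r + kk) al s = RexG m r al s.
Proof.
elim: s al m => [|x s IH] [|a al] m; rewrite ?RexG_nil ?RexG_nil2 //.
by rewrite !RexG_cons eqn_add2r -addSn IH.
Qed.

Lemma RexG_out m r al s : ~~ (m <= r < m + size s)%N ->
  RexG m r al s = [seq Rf p.1 p.2 | p <- zip al s].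
Proof.
elim: s al m => [|x s IH] [|a al] m H; rewrite ?RexG_nil ?RexG_nil2 //.
rewrite RexG_cons IH; last by move: H => /=; lia.
rewrite ifN //. move: H => /=; lia.
Qed.

Lemma size_RexG m r al s : size al = size s -> size (RexG m r al s) = size s.
Proof. by move=> H; rewrite size_map !size_zip size_iota H !minnn. Qed.

Lemma homs_RexG gr m r al s ds :
  (forall al d a, a \in gr d -> Rf al a \in gr d) -> size al = size s ->
  homs gr s ds -> homs gr (RexG m r al s) ds.
Proof.
move=> HR; elim: s al ds m => [|x s IH] [|a al] [|d ds] m Hs; rewrite ?RexG_nil //;
  try discriminate Hs.
case: Hs => Hs. rewrite RexG_cons /homs /= => /andP[Hx Hh]; apply/andP; split.
  by case: ifP => _ //; apply: HR.
exact: IH.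
Qed.

Lemma plug_cat (B1 B2 B3 : seq A) X :
  plug (size B1).+1 (size B2) (B1 ++ B2 ++ B3) X = B1 ++ X :: B3.
Proof.
by rewrite /plug /= take_size_cat // addnC -drop_drop drop_size_cat // drop_size_cat.
Qed.

Lemma block_cat T (B1 B2 B3 : seq T) :
  block (size B1).+1 (size B2) (B1 ++ B2 ++ B3) = B2.
Proof. by rewrite /block /= drop_size_cat // take_size_cat. Qed.

Lemma plugO_cat (a1 : seq Omega) a t' al2 :
  plugO op (size a1).+1 (size t').+1 (a1 ++ (a :: t') ++ al2) = a1 ++ sgprod op a t' :: al2.
Proof.
rewrite /plugO /= drop_size_cat //= take_size_cat // take_size_cat // drop_size_cat //.
Qed.


Lemma plug_cat' (B1 B2 B3 : seq A) X j n : size B1 = j -> size B2 = n ->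
  plug j.+1 n (B1 ++ B2 ++ B3) X = B1 ++ X :: B3.
Proof. by move=> <- <-; apply: plug_cat. Qed.

Lemma block_cat' T (B1 B2 B3 : seq T) j n : size B1 = j -> size B2 = n ->
  block j.+1 n (B1 ++ B2 ++ B3) = B2.
Proof. by move=> <- <-; apply: block_cat. Qed.

Section Lin.
Hypothesis Hlin : forall al (c : k) x y, Rf al (c *: x + y) = c *: Rf al x + Rf al y.

Lemma Rf_add al x y : Rf al (x + y) = Rf al x + Rf al y.
Proof. by rewrite -[x]scale1r Hlin !scale1r. Qed.

Lemma Rf_0 al : Rf al 0 = 0.
Proof.
have E := Rf_add al 0 0; rewrite addr0 in E.
apply: (addrI (Rf al 0)); by rewrite addr0 -E.
Qed.

Lemma Rf_sum al (I : Type) (rr : seq I) (P : pred I) (F : I -> A) :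
  Rf al (\sum_(i <- rr | P i) F i) = \sum_(i <- rr | P i) Rf al (F i).
Proof. exact: (big_morph (Rf al) (Rf_add al) (Rf_0 al)). Qed.

Variable mu : seq A -> A.
Hypothesis HRB : forall (a0 : Omega) (alt : seq Omega) (as_ : seq A),
        size as_ = (size alt).+1 ->
        mu [seq Rf p.1 p.2 | p <- zip (a0 :: alt) as_] =
        \sum_(1 <= r < (size as_).+1) Rf (sgprod op a0 alt) (mu (Rexcept Rf r (a0 :: alt) as_)).

Lemma key a1 a t' al2 s1 blk s2 r :
 size a1 = size s1 -> size blk = (size t').+1 -> size al2 = size s2 ->
 eta_of mu Rf (R0 (size blk) (size s1).+1 r) (plugO op (size s1).+1 (size blk) (a1 ++ (a::t') ++ al2))
   (plug (size s1).+1 (size blk) (s1 ++ blk ++ s2) (etaRi (eta_of mu Rf) (size blk) (size s1).+1 r (block (size s1).+1 (size blk) (a1 ++ (a::t') ++ al2)) (block (size s1).+1 (size blk) (s1 ++ blk ++ s2))))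
 = mu (plug (size s1).+1 (size blk) (Rexcept Rf r (a1 ++ (a::t') ++ al2) (s1 ++ blk ++ s2)) (mu (block (size s1).+1 (size blk) (Rexcept Rf r (a1 ++ (a::t') ++ al2) (s1 ++ blk ++ s2))))).
Proof.
move=> H1 H2 H3.
have -> : plugO op (size s1).+1 (size blk) (a1 ++ (a::t') ++ al2) = a1 ++ sgprod op a t' :: al2.
  by rewrite -H1 H2; apply: plugO_cat.
rewrite (block_cat' _ a1 (a::t') al2 _ _ H1 (esym H2)) (block_cat' _ _ _ _ _ _ (erefl _) (erefl _)) (plug_cat' _ _ _ _ _ _ (erefl _) (erefl _)).
rewrite RexcE RexG_cat // RexG_cat //.
rewrite (block_cat' _ _ _ _ _ _ (size_RexG _ _ _ _ H1) (size_RexG _ _ (a::t') _ (esym H2))).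
rewrite (plug_cat' _ _ _ _ _ _ (size_RexG _ _ _ _ H1) (size_RexG _ _ (a::t') _ (esym H2))).
rewrite /eta_of RexcE RexG_cat // RexG_cons.
have Hn : (0 < size blk)%N by rewrite H2.
set j := size s1; set n := size blk.
have [Hr|Hr] := ltnP r j.+1.
  rewrite /R0 /etaRi Hr.
  have -> : (j.+1 <= r < j.+1 + n)%N = false by lia.
  have -> : (1 + j == r) = false by lia.
  rewrite (@RexG_out (1+j).+1 r al2 s2); last by lia.
  rewrite (@RexG_out (1+j+n) r al2 s2); last by lia.
  rewrite (@RexG_out (1+j) r (a::t') blk); last by lia.
  by rewrite HRB // Rf_sum.
have [Hr2|Hr2] := ltnP r (j.+1 + n).
  rewrite /R0 /etaRi.
  have -> : (r < j.+1)%N = false by lia.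
  have -> : (j.+1 <= r < j.+1 + n)%N = true by lia.
  rewrite Hr2 /= eqxx.
  rewrite (@RexG_out 1 j.+1 a1 s1); last by lia.
  rewrite (@RexG_out 1 r a1 s1); last by lia.
  rewrite (@RexG_out (1+j).+1 j.+1 al2 s2); last by lia.
  rewrite (@RexG_out (1+j+n) r al2 s2); last by lia.
  have E : r = (r - j.+1).+1 + j by lia.
  by rewrite [in RHS]E RexG_shift.
rewrite /R0 /etaRi.
have -> : (r < j.+1)%N = false by lia.
have -> : (r < j.+1 + n)%N = false by lia.
rewrite andbF /=.
have -> : (1 + j == (r - n).+1) = false by lia.
rewrite (@RexG_out 1 (r - n).+1 a1 s1); last by lia.
rewrite (@RexG_out 1 r a1 s1); last by lia.
rewrite (@RexG_out (1+j) r (a::t') blk); last by lia.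
have E1 : (1 + j + n = (1 + j).+1 + n.-1)%N by lia.
have E2 : r = (r - n).+1 + n.-1 by lia.
rewrite E1 [in RexG _ r _ _]E2 RexG_shift.
by rewrite HRB // Rf_sum.
Qed.

End Lin.
End Helpers.

Theorem theorem5p13 (k : comNzRingType) (A : lmodType k) (gr : int -> {pred A})
  (Omega : Type) (op : Omega -> Omega -> Omega)
  (mu : seq A -> A) (Rf : Omega -> A -> A) :
  char0 k -> is_grading gr -> associative op ->
  is_Ainf gr mu -> is_HRB_family op gr mu Rf ->
  is_Dend_family op gr (eta_of mu Rf).
Proof.
move=> _ _ _ [Hml Hdeg Hrel] [Hlin HRdeg HRB].
split.
- move=> r als s1 s2 c x y /andP[Hr1 Hr2] Hsz.
  have [a1 [a [al2 [Eals Ha1]]]] :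
      exists a1 a al2, als = a1 ++ a :: al2 /\ size a1 = size s1.
    case E: (drop (size s1) als) => [|a al2].
      by move: (congr1 size E); rewrite size_drop Hsz /=; lia.
    exists (take (size s1) als), a, al2; split; first by rewrite -E cat_take_drop.
    by apply: size_takel; rewrite Hsz; lia.
  rewrite Eals /eta_of !RexcE !RexG_cat // !RexG_cons.
  case: ifP => _; first exact: Hml.
  by rewrite Hlin Hml.
- move=> r als as_ ds /andP[Hr1 Hr2] Hsz Hh.
  rewrite /eta_of RexcE -(@size_RexG _ _ _ Rf 1 r als as_) //.
  apply: Hdeg; first by rewrite size_RexG //; lia.
  exact: homs_RexG.
- move=> s1 s2 a b as_ Hsz; rewrite /eta_of !RexcE.
  have [x1 [x [x2 [Eas Hx1]]]] :
      exists x1 x x2, as_ = x1 ++ x :: x2 /\ size s1 = size x1.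
    case E: (drop (size s1) as_) => [|x x2].
      by move: (congr1 size E); rewrite size_drop Hsz /=; lia.
    exists (take (size s1) as_), x, x2; split; first by rewrite -E cat_take_drop.
    by rewrite size_takel // Hsz; lia.
  by rewrite Eas !RexG_cat // !RexG_cons -Hx1 add1n eqxx.
- move=> N r als as_ ds /andP[Hr1 Hr2] Hals Has Hh.
  have Hb := Hrel N (Rexcept Rf r als as_) ds ltac:(lia)
    ltac:(by rewrite RexcE size_RexG // Hals Has)
    ltac:(by rewrite RexcE; apply: homs_RexG => //; rewrite Hals Has).
  apply: (etrans _ Hb).
  apply: eq_big_nat => n /andP[Hn1 Hn2]; apply: eq_big_nat => i /andP[Hi1 Hi2].
  congr (_ *: _).
  have [s1 [blk [s2 [Eas [Hs1 Hblk]]]]] :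
      exists s1 blk s2, as_ = s1 ++ blk ++ s2 /\ size s1 = i.-1 /\ size blk = n.
    exists (take i.-1 as_), (take n (drop i.-1 as_)), (drop n (drop i.-1 as_)).
    rewrite !cat_take_drop; split; first done.
    split; apply: size_takel; rewrite ?size_drop; lia.
  have [a1 [a [t' [al2 [Eals [Ha1 Ht']]]]]] :
      exists a1 a t' al2, als = a1 ++ (a :: t') ++ al2 /\ size a1 = i.-1 /\ size t' = n.-1.
    case E: (take n (drop i.-1 als)) => [|a t'].
      move: (congr1 size E); rewrite size_takel /=; first lia.
      rewrite size_drop; lia.
    exists (take i.-1 als), a, t', (drop n (drop i.-1 als)).
    rewrite -E !cat_take_drop; split; first done.
    split; first (apply: size_takel; lia).
    move: (congr1 size E); rewrite size_takel /=; first lia.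
    rewrite size_drop; lia.
  have Hs2 : size al2 = size s2.
    by move: Hals Has; rewrite Eals Eas !size_cat /=; lia.
  rewrite Eals Eas.
  have -> : i = (size s1).+1 by lia.
  have -> : n = size blk by lia.
  apply: (@key _ _ _ _ _ Hlin _ HRB) => //; lia.
Qed.
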